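(* Let $e_i\in\mathbb{R}^d$ have strictly positive coordinates and $\xi>0$. Then the budget correspondence $p\mapsto\mathcal B_i(p)$ is $(d^{3/2}/\xi^2)\|e_i\|$-Hausdorff Lipschitz on $\Delta_\xi$, i.e. for all $p_1,p_2\in\Delta_\xi$, $d_H(\mathcal B_i(p_1),\mathcal B_i(p_2))\le\frac{d^{3/2}}{\xi^2}\|e_i\|\,\|p_1-p_2\|$.
   Context: $\Delta_\xi=\{p\in\mathbb{R}^d:p_k>\xi\ \forall k\in[d],\ \sum_{k=1}^d p_k=1\}$; $\mathcal B_i(p)=\{x\in\mathbb{R}^d_+:p\cdot x\le p\cdot e_i\}$ is the budget set of agent $i$ with endowment $e_i$; $d_H$ is the Hausdorff distance with respect to the Euclidean norm $\|\cdot\|$. *)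

(* Defs.v *)
From HB Require Import structures.
From mathcomp Require Import all_boot all_order all_algebra.
From mathcomp Require Import all_classical all_reals all_analysis.
Set Implicit Arguments. Unset Strict Implicit. Unset Printing Implicit Defensive.
Import Order.TTheory GRing.Theory Num.Theory.
Local Open Scope classical_set_scope.
Local Open Scope ring_scope.

Section Defs.
Variables (R : realType) (d : nat).

Definition dotp (p x : 'I_d -> R) : R := \sum_(k < d) p k * x k.

Definition enorm (x : 'I_d -> R) : R := Num.sqrt (\sum_(k < d) x k ^+ 2).

Definition eucl_dist (x y : 'I_d -> R) : R := enorm (fun k => x k - y k).

Definition Delta (xi : R) : set ('I_d -> R) :=
  [set p | (forall k, xi < p k) /\ \sum_(k < d) p k = 1].

Definition budget (e p : 'I_d -> R) : set ('I_d -> R) :=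
  [set x | (forall k, 0 <= x k) /\ dotp p x <= dotp p e].

(* distance from a point to a set, in extended reals (+oo for the empty set) *)
Definition pt_set_dist (a : 'I_d -> R) (B : set ('I_d -> R)) : \bar R :=
  ereal_inf [set (eucl_dist a b)%:E | b in B].

Definition hausdorff (A B : set ('I_d -> R)) : \bar R :=
  Order.max (ereal_sup [set pt_set_dist a B | a in A])
            (ereal_sup [set pt_set_dist b A | b in B]).

End Defs.

(* Main.v *)
Require Import Defs.
From HB Require Import structures.
From mathcomp Require Import all_boot all_order all_algebra.
From mathcomp Require Import all_classical all_reals all_analysis.
From mathcomp Require Import lra ring.
Import Order.TTheory GRing.Theory Num.Theory.
Local Open Scope classical_set_scope.
Local Open Scope ring_scope.

Section Helpers.
Variables (R : realType) (d : nat).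
Implicit Types (v : 'I_d -> R).

Lemma enorm_ge0 v : 0 <= enorm v.
Proof. exact: sqrtr_ge0. Qed.

Lemma sumsq_ge0 v : 0 <= \sum_(k < d) v k ^+ 2.
Proof. by apply: sumr_ge0 => k _; rewrite sqr_ge0. Qed.

Lemma abs_le_enorm v k : `|v k| <= enorm v.
Proof.
rewrite -sqrtr_sqr /enorm ler_sqrt; last exact: sumsq_ge0.
rewrite (bigD1 k) //= lerDl; apply: sumr_ge0 => j _; exact: sqr_ge0.
Qed.

Lemma enorm_le_l1 v : enorm v <= \sum_(k < d) `|v k|.
Proof.
have h0 : 0 <= \sum_(k < d) `|v k| by apply: sumr_ge0.
rewrite -(ger0_norm h0) -sqrtr_sqr /enorm ler_sqrt; last exact: sqr_ge0.
pose K := fun a b : R => 0 <= b /\ a <= b ^+ 2.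
suff : K (\sum_(k < d) v k ^+ 2) (\sum_(k < d) `|v k|) by case.
apply: (big_ind2 K); rewrite /K.
- by split; rewrite ?expr0n.
- move=> a1 b1 a2 b2 [h1 h2] [h3 h4]; split; first exact: addr_ge0.
  nra.
- move=> k _; split => //; by rewrite real_normK ?num_real.
Qed.

Lemma enorm_scale c v : enorm (fun k => c * v k) = `|c| * enorm v.
Proof.
rewrite /enorm.
have -> : \sum_(k < d) (c * v k) ^+ 2 = c ^+ 2 * \sum_(k < d) v k ^+ 2.
  by rewrite mulr_sumr; apply: eq_bigr => k _; rewrite exprMn.
by rewrite sqrtrM ?sqr_ge0 // sqrtr_sqr.
Qed.

Lemma eucl_dist_sym v w : eucl_dist v w = eucl_dist w v.
Proof.
rewrite /eucl_dist /enorm; congr Num.sqrt; apply: eq_bigr => k _.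
by rewrite -sqrrN opprB.
Qed.

Lemma eucl_dist_self v : eucl_dist v v = 0.
Proof.
rewrite /eucl_dist /enorm big1 ?sqrtr0 // => k _; by rewrite subrr expr0n.
Qed.

Lemma one_side (e : 'I_d -> R) (xi : R) p1 p2 x :
  (forall k, 0 < e k) -> 0 < xi -> Delta xi p1 -> Delta xi p2 ->
  budget e p1 x ->
  (pt_set_dist x (budget e p2) <=
    (eucl_dist p1 p2 * enorm e * (1 + d%:R * xi) / xi ^+ 2)%:E)%E.
Proof.
move=> he hxi [hp1 s1] [hp2 s2] [hx hbx].
set N := eucl_dist p1 p2; set ne := enorm e.
set S := \sum_(k < d) x k.
set E1 := \sum_(k < d) e k.
have hN k : `|p2 k - p1 k| <= N.
  by rewrite /N eucl_dist_sym; exact: (abs_le_enorm (fun k => p2 k - p1 k)).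
have hN0 : 0 <= N by exact: enorm_ge0.
have hne0 : 0 <= ne by exact: enorm_ge0.
have hS0 : 0 <= S by apply: sumr_ge0.
have hp1e : dotp p1 e <= ne.
  rewrite /dotp -[ne]mul1r -s1 mulr_suml; apply: ler_sum => k _.
  apply: ler_wpM2l; first by apply: ltW; apply: lt_trans (hp1 k).
  by apply: le_trans (abs_le_enorm e k); exact: ler_norm.
have hxiS p : (forall k, xi < p k) -> xi * S <= dotp p x.
  move=> hp; rewrite /dotp mulr_sumr; apply: ler_sum => k _.
  by apply: ler_wpM2r => //; apply: ltW.
have hS : xi * S <= ne by apply: le_trans (hxiS _ hp1) (le_trans hbx hp1e).
have hE1 : E1 <= d%:R * ne.
  apply: (@le_trans _ _ (\sum_(k < d) ne)).
    by apply: ler_sum => k _; apply: le_trans (abs_le_enorm e k); exact: ler_norm.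
  by rewrite sumr_const card_ord mulr_natl.
have hdxi : d%:R * xi <= 1.
  apply: (@le_trans _ _ (\sum_(k < d) xi)).
    by rewrite sumr_const card_ord mulr_natl.
  by rewrite -s1; apply: ler_sum => k _; apply: ltW.
have hB : 0 <= N * ne * (1 + d%:R * xi) / xi ^+ 2.
  apply: divr_ge0; last exact: sqr_ge0.
  apply: mulr_ge0; first exact: mulr_ge0.
  by apply: addr_ge0 => //; apply: mulr_ge0 => //; apply: ltW.
have hq0 : 0 <= dotp p2 e.
  by apply: sumr_ge0 => k _; apply: mulr_ge0; apply: ltW => //; apply: lt_trans (hp2 k).
case: (lerP (dotp p2 x) (dotp p2 e)) => hcase.
  apply: ereal_inf_le; exists (eucl_dist x x)%:E.
    by exists x.
  by rewrite eucl_dist_self lee_fin.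
set P := dotp p2 x; set q := dotp p2 e.
have hP0 : 0 < P by apply: le_lt_trans hcase.
set t := q / P.
have ht0 : 0 <= t by apply: divr_ge0 => //; apply: ltW.
have ht1 : t <= 1 by rewrite /t ler_pdivrMr // mul1r ltW.
have htP : t * P = q by rewrite /t divfK // gt_eqF.
pose y := fun k => t * x k.
have hy : budget e p2 y.
  split; first by move=> k; apply: mulr_ge0.
  rewrite /dotp /y.
  have -> : \sum_(k < d) p2 k * (t * x k) = t * P.
    by rewrite /P /dotp mulr_sumr; apply: eq_bigr => k _; rewrite mulrCA.
  by rewrite htP.
have hdist : eucl_dist x y <= (1 - t) * S.
  rewrite /eucl_dist /y.
  have -> : (fun k => x k - t * x k) = (fun k => (1 - t) * x k).
    by apply: funext => k; rewrite mulrBl mul1r.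
  rewrite enorm_scale ger0_norm ?subr_ge0 //.
  apply: ler_wpM2l; first by rewrite subr_ge0.
  apply: le_trans (enorm_le_l1 _) _.
  by apply: ler_sum => k _; rewrite ger0_norm.
have hPq : P - q <= N * S + N * E1.
  have h1 : P - q <= (P - dotp p1 x) + (dotp p1 e - q).
    by move: hbx; lra.
  apply: le_trans h1 _; apply: lerD.
    rewrite /P /dotp -sumrB /S mulr_sumr; apply: ler_sum => k _.
    rewrite -mulrBl; apply: ler_wpM2r => //.
    by apply: le_trans (ler_norm _) (hN k).
  rewrite /q /dotp -sumrB /E1 mulr_sumr; apply: ler_sum => k _.
  rewrite -mulrBl; apply: ler_wpM2r; first exact: ltW.
  by apply: le_trans (ler_norm _) _; rewrite -opprB normrN hN.
have key1 : (1 - t) * S * xi <= P - q.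
  have -> : 1 - t = (P - q) / P.
    by rewrite /t mulrBl divff ?gt_eqF.
  rewrite -!mulrA -[leRHS]mulr1; apply: ler_wpM2l.
    by rewrite subr_ge0; apply: ltW.
  rewrite mulrC ler_pdivrMr // mul1r mulrC; exact: hxiS.
apply: ereal_inf_le; exists (eucl_dist x y)%:E; first by exists y.
rewrite lee_fin; apply: le_trans hdist _.
rewrite ler_pdivlMr ?exprn_gt0 //.
have hxi0 : 0 <= xi by apply: ltW.
have k2 : (1 - t) * S * xi * xi <= (N * S + N * E1) * xi.
  apply: ler_wpM2r => //; exact: le_trans key1 hPq.
have k3 : N * S * xi <= N * ne by rewrite -mulrA ler_wpM2l // mulrC.
have k4 : N * E1 * xi <= N * (d%:R * ne) * xi.
  by apply: ler_wpM2r => //; apply: ler_wpM2l.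
rewrite expr2 mulrA; apply: le_trans k2 _.
rewrite mulrDl; apply: le_trans (lerD k3 k4) _.
rewrite le_eqVlt; apply/orP; left; apply/eqP; ring.
Qed.

End Helpers.

Theorem mainTheorem18 (R : realType) (d : nat) (e : 'I_d -> R) (xi : R) :
  (forall k, 0 < e k) -> 0 < xi ->
  forall p1 p2 : 'I_d -> R, Delta xi p1 -> Delta xi p2 ->
  (hausdorff (budget e p1) (budget e p2)
    <= ((d%:R `^ (3 / 2) / xi ^+ 2) * enorm e * eucl_dist p1 p2)%:E)%E.
Proof.
move=> he hxi p1 p2 hp1 hp2.
have hcmp : eucl_dist p1 p2 * enorm e * (1 + d%:R * xi) / xi ^+ 2 <=
            d%:R `^ (3 / 2) / xi ^+ 2 * enorm e * eucl_dist p1 p2.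
  have hN0 : 0 <= eucl_dist p1 p2 by exact: enorm_ge0.
  have hne0 : 0 <= enorm e by exact: enorm_ge0.
  have hdxi : d%:R * xi <= 1.
    case: hp1 => hp1 s1.
    apply: (@le_trans _ _ (\sum_(k < d) xi)).
      by rewrite sumr_const card_ord mulr_natl.
    by rewrite -s1; apply: ler_sum => k _; apply: ltW.
  have hxi0 : 0 <= xi^-1 ^+ 2 by rewrite exprn_ge0 // invr_ge0 ltW.
  case: (leqP 2 d) => hd.
    have h2 : 1 + d%:R * xi <= d%:R `^ (3 / 2).
      have hd1 : (1 : R) <= d%:R by rewrite ler1n; apply: leq_trans hd.
      apply: le_trans (le1r_powR hd1 _).
        have : (2 : R) <= d%:R by rewrite ler_nat.
        lra.
      lra.
    have -> : d%:R `^ (3 / 2) / xi ^+ 2 * enorm e * eucl_dist p1 p2 =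
              eucl_dist p1 p2 * enorm e * d%:R `^ (3 / 2) * xi^-1 ^+ 2.
      by rewrite exprVn; ring.
    rewrite -exprVn; apply: ler_wpM2r => //; apply: ler_wpM2l => //.
    exact: mulr_ge0.
  have -> : eucl_dist p1 p2 = 0.
    move: hd p1 p2 hp1 hp2 e he {hN0 hne0}.
    case: d {hdxi} => [|[|n]] // _ p1 p2 [_ s1] [_ s2] _ _.
      by move: s1; rewrite big_ord0 => /eqP; rewrite eq_sym oner_eq0.
    move: s1 s2; rewrite !big_ord1 => s1 s2.
    by rewrite /eucl_dist /enorm big_ord1 s1 s2 subrr expr0n sqrtr0.
  by rewrite !(mul0r, mulr0).
rewrite /hausdorff ge_max; apply/andP; split; apply: ge_ereal_sup => z [a Ha <-].
  have h := @one_side R d e xi p1 p2 a he hxi hp1 hp2 Ha.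
  apply: (le_trans h); by rewrite lee_fin.
have h := @one_side R d e xi p2 p1 a he hxi hp2 hp1 Ha.
apply: (le_trans h); by rewrite lee_fin eucl_dist_sym.
Qed.
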